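(* Let $G$ be a group with finite generating set $A$, and let $\varphi:L_\Sigma\to G$ be a bijection from a regular language $L_\Sigma\subseteq\Sigma^*$ over some finite alphabet $\Sigma$ such that for each $a\in A$ the relation $\{(\varphi^{-1}(g),\varphi^{-1}(ga)) : g\in G\}$ is FA-recognizable. Let $h_\varphi(n)=\max\{d_A(\varphi(w)) : w\in L_\Sigma, |w|\le n\}$. If $h_\varphi\preceq f$ for some $f\in\mathfrak{F}$, then $G\in\mathcal{B}_{\tilde f}$, where $\tilde f=f+\mathfrak{i}$.
   Context: $\mathfrak{i}(n)=n$; $d_A$ is the word metric on $G$ and $d_A(g)=d_A(e,g)$. A relation $R\subseteq(\Sigma^* )^2$ is FA-recognizable if the language of convolutions $u\otimes v$ (parallel readings of $u,v$ with the shorter padded by a new symbol $\diamond$) is regular. $\mathfrak{F}$ is the set of nondecreasing functions from some interval $[Q,\infty)\cap\mathbb{N}$ to the nonnegative reals; $g\preceq f$ means there exist $N\ge0$ and positive integers $K,M$ with $g(n)\le Kf(Mn)$ for all $n\ge N$. With $S=A\cup A^{-1}$ and $\pi:S^*\to G$ the evaluation map, a Cayley automatic representation is such a bijection $\psi:L\to G$ with $L\subseteq S^*$ (i.e., over the alphabet $S$); its function is $h(n)=\max\{d_A(\pi(w),\psi(w)): w\in L,|w|\le n\}$, and $G\in\mathcal{B}_f$ means some Cayley automatic representation over $S$ (for some finite generating set; this is independent of the choice) has $h\preceq f$. *)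

(* Defs.v *)
From Stdlib Require Import Reals ClassicalEpsilon.
From HB Require Import structures.
From mathcomp Require Import all_boot.

Set Implicit Arguments.
Unset Strict Implicit.
Unset Printing Implicit Defensive.

Record group := Group {
  carrier :> Type;
  gmul : carrier -> carrier -> carrier;
  ginv : carrier -> carrier;
  gone : carrier;
  gmulA : forall x y z, gmul x (gmul y z) = gmul (gmul x y) z;
  gmul1 : forall x, gmul gone x = x;
  gmulV : forall x, gmul (ginv x) x = gone }.

Definition pbool (P : Prop) : bool :=
  if excluded_middle_informative P then true else false.

(* a letter (a, true) stands for a, (a, false) for a^{-1} *)
Definition eval_word (G : group) (w : seq (G * bool)) : G :=
  foldr (fun p acc => gmul (if p.2 then p.1 else ginv p.1) acc) (gone G) w.

Definition is_A_word (G : group) (A : seq G) (w : seq (G * bool)) : Prop :=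
  List.Forall (fun p => List.In p.1 A) w.

Definition generates (G : group) (A : seq G) : Prop :=
  forall g : G, exists w, is_A_word A w /\ eval_word w = g.

Definition word_len_le (G : group) (A : seq G) (g : G) (n : nat) : Prop :=
  exists w, is_A_word A w /\ (size w <= n)%N /\ eval_word w = g.

(* d_A(g): length of a shortest word over A ∪ A^{-1} representing g
   (0 if none exists, which cannot happen when A generates G) *)
Definition dA (G : group) (A : seq G) (g : G) : nat :=
  match excluded_middle_informative
          (exists n, (fun m => pbool (word_len_le A g m)) n) with
  | left H => @ex_minn (fun m => pbool (word_len_le A g m)) H
  | right _ => 0%N
  end.

Definition dist (G : group) (A : seq G) (x y : G) : nat :=
  dA A (gmul (ginv x) y).

Record dfa (Sigma : finType) := DFA {
  dstate : finType;
  dstart : dstate;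
  dfinal : pred dstate;
  dtrans : dstate -> Sigma -> dstate }.

Definition accepts (Sigma : finType) (D : dfa Sigma) (w : seq Sigma) : bool :=
  dfinal (foldl (@dtrans _ D) (dstart D) w).

Definition regular (Sigma : finType) (L : seq Sigma -> Prop) : Prop :=
  exists D : dfa Sigma, forall w, L w <-> accepts D w.

(* convolution u ⊗ v; None plays the role of the padding symbol ◇ *)
Definition conv (Sigma : finType) (u v : seq Sigma) : seq (option Sigma * option Sigma) :=
  [seq (nth None (map Some u) i, nth None (map Some v) i)
  | i <- iota 0 (maxn (size u) (size v))].

Definition FA_recognizable (Sigma : finType) (R : seq Sigma -> seq Sigma -> Prop) : Prop :=
  regular (fun x => exists u v, R u v /\ x = conv u v).

Definition bij_on (Sigma : finType) (G : group) (L : seq Sigma -> Prop)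
    (phi : seq Sigma -> G) : Prop :=
  (forall u v, L u -> L v -> phi u = phi v -> u = v) /\
  (forall g : G, exists w, L w /\ phi w = g).

Definition right_mult_rel (Sigma : finType) (G : group) (L : seq Sigma -> Prop)
    (phi : seq Sigma -> G) (a : G) : seq Sigma -> seq Sigma -> Prop :=
  fun u v => L u /\ L v /\ phi v = gmul (phi u) a.

Definition automatic_rep (Sigma : finType) (G : group) (A : seq G)
    (L : seq Sigma -> Prop) (phi : seq Sigma -> G) : Prop :=
  regular L /\ bij_on L phi /\
  forall a, List.In a A -> FA_recognizable (right_mult_rel L phi a).

(* max { F w : w in L, |w| <= n }  (0 if the set is empty) *)
Definition h_fun (Sigma : finType) (L : seq Sigma -> Prop) (F : seq Sigma -> nat)
    (n : nat) : nat :=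
  \max_(k < n.+1) \max_(t : k.-tuple Sigma | pbool (L t)) F t.

Definition inF (Q : nat) (f : nat -> R) : Prop :=
  (forall n, (Q <= n)%N -> Rle 0 (f n)) /\
  (forall n m, (Q <= n)%N -> (n <= m)%N -> Rle (f n) (f m)).

Definition preceq (g f : nat -> R) : Prop :=
  exists N K M : nat, (0 < K)%N /\ (0 < M)%N /\
    forall n, (N <= n)%N -> Rle (g n) (Rmult (INR K) (f (M * n)%N)).

Definition eval_sym (Sigma : finType) (G : group) (s : Sigma -> G) (w : seq Sigma) : G :=
  foldr (fun x acc => gmul (s x) acc) (gone G) w.

(* G ∈ B_f: for some finite generating set A, with alphabet S = A ∪ A^{-1}
   (realised as a finite type Sigma injected into G by s with image exactly
   A ∪ A^{-1}), some Cayley automatic representation ψ : L -> G, L ⊆ S^*,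
   has h(n) = max{ d_A(π(w), ψ(w)) : w ∈ L, |w| <= n } ≼ f. *)
Definition B_class (G : group) (f : nat -> R) : Prop :=
  exists A : seq G, generates A /\
  exists (Sigma : finType) (s : Sigma -> G),
    injective s /\
    (forall x, exists a, List.In a A /\ (s x = a \/ s x = ginv a)) /\
    (forall a, List.In a A -> (exists x, s x = a) /\ (exists x, s x = ginv a)) /\
    exists (L : seq Sigma -> Prop) (psi : seq Sigma -> G),
      automatic_rep A L psi /\
      preceq (fun n => INR (h_fun L (fun w => dist A (eval_sym s w) (psi w)) n)) f.

(* Main.v *)
Require Import Defs.
From Stdlib Require Import Reals.
From HB Require Import structures.
From mathcomp Require Import all_boot.
From Stdlib Require Import Lra ClassicalEpsilon Classical.

Set Implicit Arguments.
Unset Strict Implicit.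
Unset Printing Implicit Defensive.


Lemma pboolP (P : Prop) : pbool P = true <-> P.
Proof. rewrite /pbool; case: excluded_middle_informative => //. Qed.

Section GroupLemmas.
Variable G : group.
Implicit Types x y z : G.

Lemma gmulV' x : gmul x (ginv x) = gone G.
Proof.
have h : gmul (ginv (ginv x)) (ginv x) = gone G by apply: gmulV.
rewrite -[LHS]gmul1 -{1}h -gmulA [gmul (ginv x) (gmul x _)]gmulA gmulV gmul1.
by [].
Qed.

Lemma gmul1r x : gmul x (gone G) = x.
Proof. by rewrite -(gmulV x) gmulA gmulV' gmul1. Qed.

Lemma ginvK x : ginv (ginv x) = x.
Proof.
by rewrite -[RHS]gmul1 -(gmulV (ginv x)) -gmulA gmulV gmul1r.
Qed.

Lemma ginvM x y : ginv (gmul x y) = gmul (ginv y) (ginv x).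
Proof.
have h : gmul (gmul (ginv y) (ginv x)) (gmul x y) = gone G.
  by rewrite -gmulA [gmul (ginv x) _]gmulA gmulV gmul1 gmulV.
by rewrite -[RHS]gmul1r -(gmulV' (gmul x y)) gmulA h gmul1.
Qed.

Lemma ginv1 : ginv (gone G) = gone G.
Proof. by rewrite -[LHS]gmul1r gmulV. Qed.
End GroupLemmas.

Lemma eval_word_cat (G : group) (w1 w2 : seq (G * bool)) :
  eval_word (w1 ++ w2) = gmul (eval_word w1) (eval_word w2).
Proof.
elim: w1 => [|p w1 IH] /=; first by rewrite gmul1.
by rewrite IH gmulA.
Qed.

Lemma is_A_word_cat (G : group) (A : seq G) w1 w2 :
  is_A_word A w1 -> is_A_word A w2 -> is_A_word A (w1 ++ w2).
Proof. move=> h1 h2; apply List.Forall_app; split => //. Qed.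

Lemma dA_le (G : group) (A : seq G) g n : word_len_le A g n -> dA A g <= n.
Proof.
move=> h; rewrite /dA; case: excluded_middle_informative => [H|H]; last by [].
case: ex_minnP => m _ hm; apply: hm; by apply/pboolP.
Qed.

Lemma dA_word (G : group) (A : seq G) g : generates A -> word_len_le A g (dA A g).
Proof.
move=> hA; rewrite /dA; case: excluded_middle_informative => [H|H].
  by case: ex_minnP => m /pboolP.
exfalso; apply: H; case: (hA g) => w [h1 h2]; exists (size w); apply/pboolP.
by exists w.
Qed.

Lemma wll_mul (G : group) (A : seq G) g h m k :
  word_len_le A g m -> word_len_le A h k -> word_len_le A (gmul g h) (m + k).
Proof.
move=> [w1 [a1 [s1 e1]]] [w2 [a2 [s2 e2]]]; exists (w1 ++ w2); split.
  exact: is_A_word_cat.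
by rewrite size_cat leq_add // eval_word_cat e1 e2.
Qed.

Lemma wll_sub (G : group) (A A' : seq G) g m :
  (forall a, List.In a A -> List.In a A') -> word_len_le A g m -> word_len_le A' g m.
Proof.
move=> sub [w [aw [sw ew]]]; exists w; split => //.
by apply: List.Forall_impl aw => p; apply: sub.
Qed.



Lemma regular_ext (S : finType) (P P' : seq S -> Prop) :
  (forall w, P w <-> P' w) -> regular P -> regular P'.
Proof. move=> e [D hD]; exists D => w; rewrite -hD; split; apply e. Qed.

Section Conv.
Variable S : finType.

Fixpoint convR (u v : seq S) : seq (option S * option S) :=
  match u, v with
  | x :: u', y :: v' => (Some x, Some y) :: convR u' v'
  | [::], _ => map (fun y => (None, Some y)) v
  | _, [::] => map (fun x => (Some x, None)) u
  end.

Lemma conv_cons (x y : S) (u v : seq S) : conv (x :: u) (y :: v) = (Some x, Some y) :: conv u v.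
Proof.
rewrite /conv /= maxnSS /= -[1]addn0 iotaDl -map_comp.
by congr (_ :: _); apply: eq_map => i.
Qed.

Lemma conv_nil_l (v : seq S) : conv [::] v = map (fun y => (None, Some y)) v.
Proof.
rewrite /conv /= max0n.
have -> : [seq (nth None ([::] : seq (option S)) i, nth None (map Some v) i) | i <- iota 0 (size v)]
  = map (fun o => (None, o)) (mkseq (nth None (map Some v)) (size (map Some v))).
  by rewrite /mkseq size_map -map_comp; apply: eq_map => i /=; rewrite nth_nil.
by rewrite mkseq_nth -map_comp.
Qed.

Lemma conv_nil_r (u : seq S) : conv u [::] = map (fun x => (Some x, None)) u.
Proof.
rewrite /conv /= maxn0.
have -> : [seq (nth None (map Some u) i, nth None ([::] : seq (option S)) i) | i <- iota 0 (size u)]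
  = map (fun o => (o, None)) (mkseq (nth None (map Some u)) (size (map Some u))).
  by rewrite /mkseq size_map -map_comp; apply: eq_map => i /=; rewrite nth_nil.
by rewrite mkseq_nth -map_comp.
Qed.

Lemma convE (u v : seq S) : conv u v = convR u v.
Proof.
elim: u v => [|x u IH] [|y v]; rewrite ?conv_nil_l ?conv_nil_r ?conv_cons ?IH //.
Qed.

Lemma convR_cat (a b u v : seq S) : size a = size b ->
  convR (a ++ u) (b ++ v) = convR a b ++ convR u v.
Proof.
elim: a b => [|x a IH] [|y b] //= [e]; by rewrite IH.
Qed.

Lemma convR_eqsize (a b : seq S) : size a = size b -> convR a b = zip (map Some a) (map Some b).
Proof. elim: a b => [|x a IH] [|y b] //= [e]; by rewrite IH. Qed.

Lemma convR_nil_r (u : seq S) : convR u [::] = map (fun x => (Some x, None)) u.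
Proof. by case: u. Qed.

Lemma convR_diag (w : seq S) : convR w w = map (fun y => (Some y, Some y)) w.
Proof. by elim: w => //= x w ->. Qed.
End Conv.

Section Block.
Variables (X Y : finType) (n : nat) (code : X -> seq Y) (y0 : Y).
Hypothesis size_code : forall x, size (code x) = n.+1.
Hypothesis code_inj : injective code.
Variable D : dfa X.

Definition bstate : finType := option (dstate D * 'I_n.+1 * {set X}).

Definition bstep (st : bstate) (y : Y) : bstate :=
  match st with
  | None => None
  | Some (q, k, C) =>
     let C' := [set x in C | nth y0 (code x) k == y] in
     if (k : nat) == n then
       match [pick x in C'] with
       | Some x => Some (dtrans q x, ord0, setT)
       | None => None end
     else Some (q, inord k.+1, C')
  end.

Definition bfinal (st : bstate) : bool :=
  match st with Some (q, k, _) => ((k : nat) == 0) && dfinal q | None => false end.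

Definition bdfa : dfa Y := @DFA Y bstate (Some (dstart D, ord0, setT)) bfinal bstep.

Lemma bstep_None w : foldl bstep None w = None.
Proof. by elim: w. Qed.

Lemma bstep_Some q (k : 'I_n.+1) C y : bstep (Some (q, k, C)) y =
  if (k : nat) == n then
    match [pick x in [set x in C | nth y0 (code x) k == y]] with
    | Some x => Some (dtrans q x, ord0, setT)
    | None => None end
  else Some (q, inord k.+1, [set x in C | nth y0 (code x) k == y]).
Proof. by []. Qed.

Lemma block_prefix q x k : k <= n ->
  foldl bstep (Some (q, ord0, setT)) (take k (code x)) =
  Some (q, inord k, [set x' | take k (code x') == take k (code x)]).
Proof.
elim: k => [|k IH] hk.
  rewrite take0.
  have -> : [set x' | take 0 (code x') == [::]] = [set: X].
    by apply/setP => x'; rewrite !inE take0.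
  have e0 : (inord 0 : 'I_n.+1) = ord0 by apply: val_inj; exact: inordK.
  by rewrite e0.
have hks : k < size (code x) by rewrite size_code ltnS ltnW.
rewrite (take_nth y0 hks) foldl_rcons.
rewrite IH; last exact: ltnW.
rewrite (bstep_Some q (inord k) [set x' | take k (code x') == take k (code x)] (nth y0 (code x) k)).
have ek : ((inord k : 'I_n.+1) : nat) = k by rewrite inordK // ltnS ltnW.
have hn : (k == n) = false by apply/negbTE; rewrite neq_ltn hk.
rewrite ek hn.
have -> : [set x0 in [set x' | take k (code x') == take k (code x)]
            | nth y0 (code x0) k == nth y0 (code x) k]
   = [set x' | take k.+1 (code x') == rcons (take k (code x)) (nth y0 (code x) k)].
  apply/setP => x'; rewrite !inE.
  have hks' : k < size (code x') by rewrite size_code ltnS ltnW.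
  by rewrite (take_nth y0 hks') eqseq_rcons.
reflexivity.
Qed.

Lemma block_full q x :
  foldl bstep (Some (q, ord0, setT)) (code x) = Some (dtrans q x, ord0, setT).
Proof.
have hks : n < size (code x) by rewrite size_code.
have e : code x = rcons (take n (code x)) (nth y0 (code x) n).
  by rewrite -take_nth // take_oversize // size_code.
rewrite {1}e foldl_rcons (block_prefix q x (leqnn n)).
rewrite (bstep_Some q (inord n) [set x' | take n (code x') == take n (code x)] (nth y0 (code x) n)).
have en : ((inord n : 'I_n.+1) : nat) = n by rewrite inordK.
rewrite en eqxx.
have HC : forall x', (x' \in [set x0 in [set x'' | take n (code x'') == take n (code x)]
     | nth y0 (code x0) n == nth y0 (code x) n]) = (x' == x).
  move=> x'; rewrite !inE.
  have hks' : n < size (code x') by rewrite size_code.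
  rewrite -eqseq_rcons -!take_nth // !take_oversize ?size_code //.
  by apply/eqP/eqP => [/code_inj|->].
case: pickP => [x' hx'|h]; first by move: hx'; rewrite HC => /eqP ->.
by move: (h x); rewrite HC eqxx.
Qed.

Lemma block_flat q u :
  foldl bstep (Some (q, ord0, setT)) (flatten (map code u)) =
  Some (foldl (@dtrans _ D) q u, ord0, setT).
Proof.
elim: u q => [|x u IH] q; first by [].
by rewrite /= foldl_cat block_full IH.
Qed.

Lemma block_back q w q' k C :
  foldl bstep (Some (q, ord0, setT)) w = Some (q', k, C) ->
  exists u p, w = flatten (map code u) ++ p /\ size p = k /\
    q' = foldl (@dtrans _ D) q u /\ (forall x, (x \in C) = (take k (code x) == p)).
Proof.
elim/last_ind: w q' k C => [|w y IH] q' k C.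
  move=> [<- <- <-]; exists [::], [::]; split => //; split => //; split => //.
  by move=> x; rewrite in_setT take0.
rewrite foldl_rcons.
case e: (foldl bstep (Some (q, ord0, setT)) w) => [[[q1 k1] C1]|]; last first.
  by move=> H; discriminate H.
have [u [p [ew [sp [eq1 hC]]]]] := IH _ _ _ e.
rewrite (bstep_Some q1 k1 C1 y).
case: (boolP ((k1 : nat) == n)) => hk1.

  case: pickP => [x hx|h]; last by move=> H; discriminate H.
  move=> [<- <- <-].
  rewrite inE in hx; case/andP: hx => hxC /eqP hy.
  rewrite hC in hxC.
  have hks : k1 < size (code x) by rewrite size_code (eqP hk1).
  have ecx : code x = rcons p y.
    rewrite -(eqP hxC) -hy -take_nth // take_oversize // size_code (eqP hk1) //.
  exists (rcons u x), [::]; split.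
    by rewrite ew cats0 -!cats1 map_cat flatten_cat /= cats0 ecx -cats1 catA.
  split => //; split; first by rewrite eq1 foldl_rcons.
  by move=> x0; rewrite in_setT take0 eqxx.
move=> [<- <- <-].
have hk1n : k1 < n by rewrite ltn_neqAle hk1 -ltnS ltn_ord.
have ek : ((inord k1.+1 : 'I_n.+1) : nat) = k1.+1 by rewrite inordK.
exists u, (rcons p y); split; first by rewrite ew rcons_cat.
split; first by rewrite ek size_rcons sp.
split => // x0; rewrite ek inE hC.
have hks : k1 < size (code x0) by rewrite size_code ltnW.
by rewrite (take_nth y0 hks) eqseq_rcons.
Qed.


End Block.


Lemma block_regular (X Y : finType) (n : nat) (code : X -> seq Y) (y0 : Y)
  (size_code : forall x, size (code x) = n.+1) (code_inj : injective code)
  (P : seq X -> Prop) : regular P ->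
  regular (fun w => exists z, P z /\ w = flatten (map code z)).
Proof.
move=> [D hD]; exists (bdfa n code y0 D) => w; split.
  move=> [z [Pz ->]]; rewrite /accepts /=.
  rewrite (block_flat y0 size_code code_inj).
  by rewrite /bfinal; apply/andP; split => //; apply/hD.
rewrite /accepts /=.
case e: (foldl _ _ w) => [[[q k] C]|] //= /andP [/eqP k0 fin].
have [u [p [ew [sp [eq1 _]]]]] := block_back size_code e.

exists u; split; first by apply/hD; rewrite /accepts -eq1.
by move: sp; rewrite k0 ew => /size0nil ->; rewrite cats0.
Qed.

Lemma size_flat (X Y : Type) (c : nat) (code : X -> seq Y)
  (size_code : forall x, size (code x) = c) u :
  size (flatten (map code u)) = c * size u.
Proof.
elim: u => [|x u IH] /=; first by rewrite muln0.
by rewrite size_cat IH size_code mulnS.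
Qed.

Lemma flat_inj (X Y : Type) (n : nat) (code : X -> seq Y)
  (size_code : forall x, size (code x) = n.+1) (code_inj : injective code) :
  injective (fun u => flatten (map code u)).
Proof.
move=> u v /= e.
have es : size u = size v.
  have := congr1 size e; rewrite !(size_flat size_code).
  by move/eqP; rewrite eqn_mul2l /= => /eqP.
elim: u v es e => [|x u IH] [|y v] //= [es] e.
have e1 := congr1 (take n.+1) e; have e2 := congr1 (drop n.+1) e.
rewrite !take_size_cat ?size_code // in e1.
rewrite !drop_size_cat ?size_code // in e2.
by rewrite (code_inj _ _ e1) (IH _ es e2).
Qed.

Section Diag.
Variable S : finType.
Variable D : dfa S.
Definition dgstate : finType := option (dstate D).
Definition dgstep (st : dgstate) (p : option S * option S) : dgstate :=
  match st, p with
  | Some q, (Some y1, Some y2) => if y1 == y2 then Some (dtrans q y1) else None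
  | _, _ => None
  end.
Definition dgfinal (st : dgstate) : bool :=
  match st with Some q => dfinal q | None => false end.
Definition dgdfa : dfa (option S * option S)%type := @DFA _ dgstate (Some (dstart D)) dgfinal dgstep.

Lemma dg_fwd q w : foldl dgstep (Some q) (map (fun y => (Some y, Some y)) w) =
  Some (foldl (@dtrans _ D) q w).
Proof. elim: w q => [|y w IH] q //=; by rewrite eqxx IH. Qed.

Lemma dg_None x : foldl dgstep None x = None.
Proof. by elim: x. Qed.

Lemma dg_back x q q' : foldl dgstep (Some q) x = Some q' ->
  exists w, x = map (fun y => (Some y, Some y)) w /\ q' = foldl (@dtrans _ D) q w.
Proof.
elim: x q => [|[[y1|] [y2|]] x IH] q /=.
- by move=> [<-]; exists [::].
- case: eqP => [<-|_]; last by rewrite dg_None.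
  move=> /IH [w [-> ->]]; by exists (y1 :: w).
- by rewrite dg_None.
- by rewrite dg_None.
- by rewrite dg_None.
Qed.
End Diag.

Lemma diag_regular (S : finType) (P : seq S -> Prop) : regular P ->
  regular (fun x => exists w, P w /\ x = conv w w).
Proof.
move=> [D hD]; exists (dgdfa D) => x; split.
  move=> [w [Pw ->]]; rewrite /accepts /= convE convR_diag dg_fwd /=.
  exact/hD.
rewrite /accepts /=; case e: (foldl _ _ x) => [q|] //= fin.
have [w [-> eq]] := dg_back e.
exists w; split; last by rewrite convE convR_diag.
by apply/hD; rewrite /accepts -eq.
Qed.



Section Enc.
Variables (X Y : finType) (z0 z1 : Y).
Hypothesis hz : z0 != z1.

Definition cN := #|X|.
Definition enc (x : X) : seq Y :=
  mkseq (fun j => if j == (enum_rank x : nat) then z1 else z0) cN.+1.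

Lemma size_enc x : size (enc x) = cN.+1.
Proof. by rewrite size_mkseq. Qed.

Lemma enc_inj : injective enc.
Proof.
move=> x x' e.
have hx : (enum_rank x : nat) < cN.+1 by rewrite ltnS ltnW.
have := congr1 (fun s => nth z0 s (enum_rank x)) e.
rewrite /enc !nth_mkseq // eqxx.
case: (boolP ((enum_rank x : nat) == enum_rank x')) => h.
  by move=> _; apply: enum_rank_inj; apply: val_inj; apply/eqP.
by move=> h'; move: hz; rewrite h' eqxx.
Qed.

Definition encO (o : option X) : seq (option Y) :=
  match o with None => nseq cN.+1 None | Some x => map Some (enc x) end.

Lemma size_encO o : size (encO o) = cN.+1.
Proof. case: o => [x|]; [exact: (etrans (size_map _ _) (size_enc x)) | exact: size_nseq]. Qed.

Lemma encO_inj : injective encO.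
Proof.
move=> [x|] [x'|] //=.
- move=> e; congr Some; apply: enc_inj; apply: (inj_map (@Some_inj _)); exact: e.
Qed.

Definition codeP (p : option X * option X) : seq (option Y * option Y) :=
  zip (encO p.1) (encO p.2).

Lemma size_codeP p : size (codeP p) = cN.+1.
Proof. by rewrite /codeP size_zip !size_encO minnn. Qed.

Lemma codeP_inj : injective codeP.
Proof.
move=> [a b] [a' b'] e.
have e1 := congr1 unzip1 e; have e2 := congr1 unzip2 e.
rewrite /codeP /= !unzip1_zip ?size_encO // in e1.
rewrite /codeP /= !unzip2_zip ?size_encO // in e2.
by rewrite (encO_inj e1) (encO_inj e2).
Qed.

Definition encw (u : seq X) : seq Y := flatten (map enc u).

Lemma zip_nseq_l (A B : Type) (a : A) (s : seq B) :
  zip (nseq (size s) a) s = map (fun b => (a, b)) s.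
Proof. by elim: s => //= b s ->. Qed.

Lemma zip_nseq_r (A B : Type) (a : A) (s : seq B) :
  zip s (nseq (size s) a) = map (fun b => (b, a)) s.
Proof. by elim: s => //= b s ->. Qed.

Lemma enc_nil_l v : map (fun b => (None, Some b)) (encw v)
  = flatten (map codeP (map (fun y => (None, Some y)) v)).
Proof.
elim: v => [|y v IH]; first by [].
rewrite (_ : encw (y :: v) = enc y ++ encw v) // map_cat IH.
rewrite (_ : flatten (map codeP (map (fun y => (None, Some y)) (y :: v))) = codeP (None, Some y) ++ flatten (map codeP (map (fun y => (None, Some y)) v))) //.
congr cat.
change (map (fun b => (None : option Y, Some b)) (enc y) = zip (nseq cN.+1 None) (map Some (enc y))).
rewrite -(size_enc y) -(size_map Some) zip_nseq_l -map_comp.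
by [].
Qed.

Lemma enc_nil_r v : map (fun b => (Some b, None)) (encw v)
  = flatten (map codeP (map (fun y => (Some y, None)) v)).
Proof.
elim: v => [|y v IH]; first by [].
rewrite (_ : encw (y :: v) = enc y ++ encw v) // map_cat IH.
rewrite (_ : flatten (map codeP (map (fun y => (Some y, None)) (y :: v))) = codeP (Some y, None) ++ flatten (map codeP (map (fun y => (Some y, None)) v))) //.
congr cat.
change (map (fun b => (Some b, None : option Y)) (enc y) = zip (map Some (enc y)) (nseq cN.+1 None)).
rewrite -(size_enc y) -(size_map Some) zip_nseq_r -map_comp.
by [].
Qed.

Lemma conv_enc u v : conv (encw u) (encw v) = flatten (map codeP (conv u v)).
Proof.
rewrite !convE.
elim: u v => [|x u IH] [|y v].
- by [].
- exact: enc_nil_l.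
- rewrite (_ : encw [::] = [::]) // convR_nil_r; exact: enc_nil_r.
rewrite (_ : encw (x :: u) = enc x ++ encw u) // (_ : encw (y :: v) = enc y ++ encw v) //.
rewrite convR_cat; last by rewrite !size_enc.
rewrite convR_eqsize; last by rewrite !size_enc.
rewrite IH.
by [].
Qed.
End Enc.



Lemma nth_In' (T : Type) (d : T) (l : seq T) i : i < size l -> List.In (nth d l i) l.
Proof.
elim: l i => [|x l IH] [|i] //= hi; first by left.
by right; apply: IH.
Qed.

Lemma In_nth' (T : Type) (d : T) (l : seq T) g : List.In g l ->
  exists i, i < size l /\ nth d l i = g.
Proof.
elim: l => [|x l IH] //= [->|/IH [i [hi e]]]; first by exists 0.
by exists i.+1.
Qed.

Section Alpha.
Variable G : group.
Variable l : seq G.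

Definition fo (i : 'I_(size l)) : bool :=
  pbool (forall j, j < i -> nth (gone G) l j <> nth (gone G) l i).

Definition Alph : finType := {i : 'I_(size l) | fo i}.

Definition sA (x : Alph) : G := nth (gone G) l (val (val x)).

Lemma sA_inj : injective sA.
Proof.
move=> [i hi] [j hj]; rewrite /sA /= => e.
apply: val_inj; apply: val_inj => /=.
move/pboolP: hi => hi; move/pboolP: hj => hj.
case: (ltngtP i j) => // h.
- by case: (hj _ h).
- by case: (hi _ h); rewrite e.
Qed.

Lemma sA_in x : List.In (sA x) l.
Proof. by apply: nth_In'; rewrite ltn_ord. Qed.

Lemma sA_surj g : List.In g l -> exists x, sA x = g.
Proof.
move=> hg.
have ex : exists i, (fun i => pbool (i < size l /\ nth (gone G) l i = g)) i.
  have [i [hi e]] := In_nth' (gone G) hg; exists i; exact/pboolP.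
case: (ex_minnP ex) => m /pboolP [hm em] hmin.
have hfo : fo (Ordinal hm).
  apply/pboolP => j /= hj ej.
  have : m <= j by apply: hmin; apply/pboolP; split; [exact: ltn_trans hj hm | by rewrite ej].
  by rewrite leqNgt hj.
by exists (exist _ (Ordinal hm) hfo).
Qed.
End Alpha.

Lemma h_ge (S : finType) (L : seq S -> Prop) (F : seq S -> nat) u n :
  L u -> size u <= n -> F u <= h_fun L F n.
Proof.
move=> Lu hs; rewrite /h_fun.
have hk : size u < n.+1 by [].
apply: leq_trans _ (leq_bigmax (Ordinal hk)).
exact: (@leq_bigmax_cond _ (fun t : (size u).-tuple S => pbool (L t)) (fun t => F t) (in_tuple u) (proj2 (pboolP _) Lu)).
Qed.

Lemma inv_eval (G : group) (A : seq G) (S : finType) (s : S -> G) :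
  (forall x, exists a, List.In a A /\ (s x = a \/ s x = ginv a)) ->
  forall t, word_len_le A (ginv (eval_sym s t)) (size t).
Proof.
move=> hs; elim => [|x t IH].
  by exists [::]; split; [constructor | split => //=; rewrite ginv1].
rewrite (_ : eval_sym s (x :: t) = gmul (s x) (eval_sym s t)) // ginvM.
rewrite (_ : size (x :: t) = size t + 1); last by rewrite addn1.
apply: wll_mul IH _.
have [a [ha [e|e]]] := hs x.
  exists [:: (a, false)]; split; first by constructor.
  by split => //=; rewrite gmul1r e.
exists [:: (a, true)]; split; first by constructor.
by split => //=; rewrite gmul1r e ginvK.
Qed.

Lemma regular_nil (S : finType) : regular (fun w : seq S => w = [::]).
Proof.
exists (@DFA S bool true id (fun _ _ => false)) => w; rewrite /accepts /=.
case: w => [|y w] //=; split => //.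
by have -> : foldl (fun=> xpred0) false w = false by elim: w.
Qed.

Lemma In_cat (T : Type) (x : T) (s1 s2 : seq T) :
  List.In x (s1 ++ s2) <-> List.In x s1 \/ List.In x s2.
Proof.
elim: s1 => [|y s1 IH] /=; first by split; [right | case].
rewrite IH; tauto.
Qed.

Lemma In_map (T U : Type) (f : T -> U) (y : U) (s : seq T) :
  List.In y (map f s) <-> exists x, f x = y /\ List.In x s.
Proof.
elim: s => [|x s IH] /=; first by split => // [[x []]].
rewrite IH; split.
  by case=> [e|[x' [e h]]]; [exists x; split => //; left | exists x'; split => //; right].
by case=> x' [e [->|h]]; [left | right; exists x'].
Qed.



Lemma preceq_final (Q : nat) (f : nat -> R) (hf : inF Q f) (h h' : nat -> nat) :
  preceq (fun n => INR (h n)) f -> (forall n, h' n <= n + h n) ->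
  preceq (fun n => INR (h' n)) (fun n => Rplus (f n) (INR n)).
Proof.
move=> [N [K [M [hK [hM hb]]]]] hh'.
exists (maxn N Q), K, M; split => //; split => // n hn.
have hNn : N <= n by apply: leq_trans hn; apply: leq_maxl.
have hQn : Q <= n by apply: leq_trans hn; apply: leq_maxr.
have h1 := hb n hNn.
have h2 : Rle 0 (f (M * n)%N) by apply: (proj1 hf); apply: leq_trans hQn _; apply: leq_pmull.
have h3 : Rle (INR (h' n)) (INR n + INR (h n)).
  rewrite -plus_INR; apply: le_INR; apply/leP; exact: hh'.
have h4 : Rle (INR n) (INR K * INR (M * n)%N).
  rewrite -mult_INR; apply: le_INR; apply/leP.
  by apply: leq_trans (leq_pmull _ hK); apply: leq_pmull.
rewrite Rmult_plus_distr_l; lra.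
Qed.

Theorem mainTheorem9 (G : group) (A : seq G) (hA : generates A)
  (Sigma : finType) (L : seq Sigma -> Prop) (phi : seq Sigma -> G)
  (hL : regular L) (hphi : bij_on L phi)
  (hrec : forall a, List.In a A -> FA_recognizable (right_mult_rel L phi a))
  (Q : nat) (f : nat -> R) (hf : inF Q f)
  (hh : preceq (fun n => INR (h_fun L (fun w => dA A (phi w)) n)) f) :
  B_class G (fun n => Rplus (f n) (INR n)).
Proof.
pose A' := gone G :: A.
have hsub : forall a, List.In a A -> List.In a A' by move=> a ha; right.
have hA' : generates A'.
  move=> g; case: (hA g) => w [aw ew]; exists w; split => //.
  by apply: List.Forall_impl aw => p hp; right.
pose l := A' ++ map (@ginv G) A'.
have hs1 : forall x : Alph l, exists a, List.In a A' /\ (sA x = a \/ sA x = ginv a).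
  move=> x; have [h|h] := proj1 (In_cat _ _ _) (sA_in x).
    by exists (sA x); split => //; left.
  case/In_map: h => a [e ha]; exists a; split => //; right; by rewrite e.
have hs2 : forall a, List.In a A' ->
    (exists x : Alph l, sA x = a) /\ (exists x : Alph l, sA x = ginv a).
  move=> a ha; split; apply: sA_surj; apply/In_cat.
    by left.
  by right; apply/In_map; exists a.
exists A'; split => //; exists (Alph l), (@sA G l); split; first exact: sA_inj.
split => //; split => //.
case: (classic (exists g : G, g <> gone G)) => [[g0 hg0]|triv]; last first.
  have allg : forall g : G, g = gone G.
    by move=> g; apply: NNPP => hg; apply: triv; exists g.
  exists (fun w => w = [::]), (fun _ => gone G); split.
    split; first exact: regular_nil.
    split.
      split; first by move=> u v -> ->.
      by move=> g; exists [::]; split => //; rewrite (allg g).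
    move=> a _; apply: regular_ext (regular_nil _) => x; split.
      move=> ->; exists [::], [::]; split; last by rewrite convE.
      by split => //; split => //; rewrite [RHS]allg.
    by move=> [w1 [w2 [[-> [-> _]] ->]]]; rewrite convE.
  apply: (preceq_final hf hh) => n.
  apply: leq_trans (leq_addr _ _).
  apply/bigmax_leqP => k _; apply/bigmax_leqP => t _.
  rewrite /dist; apply: dA_le; exists [::]; split; first by constructor.
  by split => //; rewrite [RHS]allg.
have [a0 [ha0 na0]] : exists a0, List.In a0 A /\ a0 <> gone G.
  apply: NNPP => hno; case: (hA g0) => w [aw ew]; apply: hg0; rewrite -ew.
  elim: w aw {ew} => [|[b t] w IH] aw; first by [].
  case/List.Forall_cons_iff: aw => hb aw.
  have eb : b = gone G by apply: NNPP => nb; apply: hno; exists b.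
  rewrite (_ : eval_word ((b, t) :: w) = gmul (if t then b else ginv b) (eval_word w)) //.
  by rewrite eb (IH aw); clear hb; case: t; rewrite ?ginv1 gmul1.
have [z0 ez0] := (hs2 _ (or_introl erefl)).1.
have [z1 ez1] := (hs2 a0 (hsub _ ha0)).1.
have hz : z0 != z1 by apply/eqP => e; apply: na0; rewrite -ez1 -e ez0.
pose E := @encw Sigma _ z0 z1.
pose L' := fun w => exists u, L u /\ w = E u.
pose psi := fun w => match excluded_middle_informative (L' w) with
  | left H => phi (proj1_sig (constructive_indefinite_description _ H))
  | right _ => gone G end.
have Einj : injective E := flat_inj (size_enc z0 z1) (enc_inj hz).
have psiE : forall u, L u -> psi (E u) = phi u.
  move=> u Lu; rewrite /psi; case: excluded_middle_informative => [H|H]; last first.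
    by exfalso; apply: H; exists u.
  case: constructive_indefinite_description => u' /= [_ e].
  by rewrite (Einj _ _ e).
have regL' : regular L'.
  exact: (block_regular z0 (size_enc z0 z1) (enc_inj hz) hL).
have psi_inj : forall u v, L' u -> L' v -> psi u = psi v -> u = v.
  move=> _ _ [u [Lu ->]] [v [Lv ->]]; rewrite !psiE // => e.
  by rewrite (hphi.1 _ _ Lu Lv e).
exists L', psi; split.
  split => //; split.
    split => //.
    move=> g; have [u [Lu e]] := hphi.2 g; exists (E u); split; first by exists u.
    by rewrite psiE.
  move=> a [<-|ha].
    apply: regular_ext (diag_regular regL') => x; split.
      move=> [w [Lw ->]]; exists w, w; split => //; split => //; split => //.
      by rewrite gmul1r.
    move=> [w1 [w2 [[Lw1 [Lw2 e]] ->]]]; exists w1; split => //.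
    by rewrite gmul1r in e; rewrite (psi_inj _ _ Lw1 Lw2 (esym e)).
  apply: regular_ext (block_regular (None, None) (size_codeP z0 z1) (codeP_inj hz) (hrec a ha)) => x.
  split.
    move=> [z [[u [v [[Lu [Lv e]] ->]]] ->]]; exists (E u), (E v); split.
      by split; [exists u | split; [exists v | rewrite !psiE]].
    by rewrite conv_enc.
  move=> [_ [_ [[[u [Lu ->]] [[v [Lv ->]] e]] ->]]].
  exists (conv u v); split; last by rewrite conv_enc.
  by exists u, v; split => //; split => //; split => //; rewrite -!psiE.
apply: (preceq_final hf hh) => n.
rewrite /h_fun; apply/bigmax_leqP => k _; apply/bigmax_leqP => t /pboolP [u [Lu et]].
have hk : size (E u) <= n by rewrite -et size_tuple -ltnS ltn_ord.
have hsz : size u <= n.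
  apply: leq_trans hk; rewrite (size_flat (size_enc z0 z1)); exact: leq_pmull.
rewrite /dist et psiE //.
apply: leq_trans (dA_le (wll_mul (inv_eval hs1 (E u)) (wll_sub hsub (dA_word (phi u) hA)))) _.
apply: leq_add => //.
exact: (h_ge (fun w => dA A (phi w)) Lu hsz).
Qed.
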